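(* There exists a constant $C'>0$ such that $|\varrho_N(x)|<1/x^2$ for all sufficiently large positive integers $N$ and all $x\in\left[N,\exp\!\left(C'(\log N)^2\right)\right]$.
   Context: For a positive integer $N$ and real $x$, $\varrho_N(x):=\prod_{n=1}^N\cos(\pi x/n)$. *)

(* Defs.v *)
From Stdlib Require Import Reals.
Open Scope R_scope.

Fixpoint prod_1_to (N : nat) (f : nat -> R) : R :=
  match N with
  | O => 1
  | S k => prod_1_to k f * f (S k)
  end.

Definition varrho (N : nat) (x : R) : R :=
  prod_1_to N (fun n => cos (PI * x / INR n)).

(* Main.v *)
Require Import Defs.
From Stdlib Require Import Reals Lra Lia Psatz Classical Factorial ZArith.
Open Scope R_scope.

Lemma exp_pow a n : exp a ^ n = exp (INR n * a).
Proof. induction n. simpl. rewrite Rmult_0_l, exp_0. ring.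
  rewrite S_INR. simpl. rewrite IHn, <- exp_plus. f_equal. ring. Qed.

Lemma dIVT (Q : nat -> Prop) a b : (a <= b)%nat -> ~ Q a -> Q b ->
  exists n, (a <= n < b)%nat /\ ~ Q n /\ Q (S n).
Proof.
  intros Hab Ha Hb. induction Hab. contradiction.
  destruct (classic (Q m)) as [Hm|Hm].
  - destruct (IHHab Hm) as [n [? ?]]. exists n. split. lia. auto.
  - exists m. split. lia. auto.
Qed.

Lemma fact_le_pow k : (fact k <= k ^ k)%nat.
Proof. induction k. simpl; lia. simpl fact. change ((S k) ^ (S k))%nat with (S k * (S k) ^ k)%nat.
  assert (k ^ k <= (S k) ^ k)%nat by (apply Nat.pow_le_mono_l; lia). nia. Qed.

Lemma pow2_ge n : INR n <= 2 ^ n.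
Proof. induction n. simpl; lra. rewrite S_INR. simpl.
  assert (1 <= 2 ^ n) by (apply pow_R1_Rle; lra). lra. Qed.

Lemma pow_ratio m t n : 0 < m -> 0 <= t -> t * INR n <= m -> (m + t) ^ n <= 3 * m ^ n.
Proof.
  intros Hm Ht H.
  replace (m + t) with (m * (1 + t / m)) by (field; lra).
  rewrite Rpow_mult_distr.
  assert ((1 + t/m) ^ n <= 3).
  { eapply Rle_trans. apply pow_incr. split. assert (0 <= t/m) by (unfold Rdiv; apply Rmult_le_pos; [lra| left; apply Rinv_0_lt_compat; lra]). lra.
    apply exp_ineq1_le. rewrite exp_pow.
    eapply Rle_trans with (exp 1). 
    assert (INR n * (t / m) <= 1).
    { assert (INR n * (t / m) = t * INR n / m) by (field; lra). rewrite H0.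
      apply (Rmult_le_reg_r m); [lra|]. unfold Rdiv. rewrite Rmult_assoc, Rinv_l by lra. lra. }
    destruct (Req_dec (INR n * (t/m)) 1) as [e|e]. rewrite e; lra.
    left. apply exp_increasing. lra.
    apply exp_le_3. }
  assert (0 <= m ^ n) by (apply pow_le; lra). nra.
Qed.

Lemma pow_le1' c n : 0 <= c <= 1 -> c ^ n <= 1.
Proof. intros H. induction n; simpl. lra. assert (0 <= c ^ n) by (apply pow_le; lra). nra. Qed.

Lemma pow_decr c a b : 0 <= c <= 1 -> (a <= b)%nat -> c ^ b <= c ^ a.
Proof. intros Hc Hab. replace b with (a + (b - a))%nat by lia. rewrite pow_add.
  assert (0 <= c ^ (b - a) <= 1). { split. apply pow_le; lra. apply pow_le1'; lra. }
  assert (0 <= c ^ a) by (apply pow_le; lra). nra. Qed.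

Lemma ln_le_mono a b : 0 < a -> a <= b -> ln a <= ln b.
Proof. intros. destruct (Req_dec a b). subst; lra. left. apply ln_increasing; lra. Qed.

Fixpoint cnt (f : nat -> R) (c : R) (N : nat) : nat :=
  match N with O => O | S k => (cnt f c k + if Rle_dec (Rabs (f (S k))) c then 1 else 0)%nat end.

Lemma prod_bound f c N : 0 <= c <= 1 -> (forall n, Rabs (f n) <= 1) ->
  Rabs (prod_1_to N f) <= c ^ (cnt f c N).
Proof.
  intros Hc Hf. induction N; simpl. rewrite Rabs_R1; lra.
  rewrite Rabs_mult. destruct (Rle_dec (Rabs (f (S N))) c).
  - rewrite Nat.add_1_r. simpl. rewrite Rmult_comm.
    apply Rmult_le_compat; auto using Rabs_pos.
  - rewrite Nat.add_0_r. replace (c ^ cnt f c N) with (c ^ cnt f c N * 1) by ring.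
    apply Rmult_le_compat; auto using Rabs_pos.
Qed.

Lemma cnt_mono f c a b : (a <= b)%nat -> (cnt f c a <= cnt f c b)%nat.
Proof. induction 1. lia. simpl. lia. Qed.

Lemma cnt_step f c a m b : (a < m <= b)%nat -> Rabs (f m) <= c -> (S (cnt f c a) <= cnt f c b)%nat.
Proof.
  intros [H1 H2] H. destruct m. lia.
  assert (cnt f c a <= cnt f c m)%nat by (apply cnt_mono; lia).
  assert (S (cnt f c m) <= cnt f c (S m))%nat.
  { simpl. destruct (Rle_dec (Rabs (f (S m))) c). lia. contradiction. }
  pose proof (cnt_mono f c _ _ H2). lia.
Qed.

Lemma cnt_blocks f c base L J :
  (forall j, (j < J)%nat -> exists i, (i < L)%nat /\ Rabs (f (base + j * L + 1 + i)%nat) <= c) ->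
  (J <= cnt f c (base + J * L))%nat.
Proof.
  induction J; intros H. lia.
  assert (IH := IHJ ltac:(intros; apply H; lia)).
  destruct (H J ltac:(lia)) as [i [Hi Hc]].
  pose proof (cnt_step f c (base + J * L) (base + J * L + 1 + i) (base + S J * L)
    ltac:(simpl; lia) Hc). lia.
Qed.
Definition near (y d : R) := exists z : Z, Rabs (y - IZR z) <= d.

Lemma cos_shift_nat a n : Rabs (cos (a + INR n * PI)) = Rabs (cos a).
Proof. induction n. simpl. f_equal. f_equal. ring.
  rewrite S_INR. replace (a + (INR n + 1) * PI) with ((a + INR n * PI) + PI) by ring.
  rewrite neg_cos, Rabs_Ropp. exact IHn. Qed.

Lemma cos_shift a z : Rabs (cos (a + IZR z * PI)) = Rabs (cos a).
Proof.
  destruct (Z_le_gt_dec 0 z).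
  - rewrite <- (Z2Nat.id z) by lia. rewrite <- INR_IZR_INZ. apply cos_shift_nat.
  - assert (z = - Z.of_nat (Z.to_nat (- z)))%Z by lia. rewrite H, opp_IZR, <- INR_IZR_INZ.
    set (n := Z.to_nat (-z)).
    rewrite <- (cos_shift_nat (a + - INR n * PI) n). f_equal. f_equal. ring.
Qed.

Lemma cos_notnear y d : 0 < d <= 1/2 -> ~ near y d -> Rabs (cos (PI * y)) <= cos (PI * d).
Proof.
  intros Hd Hn.
  set (u := up (y - 1/2)). destruct (archimed (y - 1/2)) as [H1 H2]. fold u in H1, H2.
  set (r := y - IZR u).
  assert (Hr : d < Rabs r). { apply Rnot_le_lt. intro. apply Hn. exists u. exact H. }
  replace (PI * y) with (PI * r + IZR u * PI) by (unfold r; ring).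
  rewrite cos_shift.
  assert (PI * d <= PI * Rabs r) by (apply Rmult_le_compat_l; [ pose proof PI_RGT_0; lra | lra]).
  assert (Hr2: -(1/2) <= r <= 1/2) by (unfold r; lra).
  assert (Rabs r <= 1/2) by (apply Rabs_le; lra).
  assert (PI * Rabs r <= PI/2) by (pose proof PI_RGT_0; nra).
  assert (0 < PI) by apply PI_RGT_0.
  assert (E: Rabs (cos (PI * r)) = cos (PI * Rabs r)).
  { destruct (Rle_dec 0 r).
    - rewrite (Rabs_right r) by lra. apply Rabs_right. apply Rle_ge, cos_ge_0; nra.
    - rewrite (Rabs_left r) by lra. replace (PI * - r) with (- (PI * r)) by ring.
      rewrite cos_neg. apply Rabs_right. apply Rle_ge, cos_ge_0; nra. }
  rewrite E. destruct (Req_dec (PI * d) (PI * Rabs r)) as [e|e]. rewrite e; lra.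
  left. apply cos_decreasing_1; try nra.
Qed.

Lemma cos_small d : 0 <= d <= 1/2 -> cos (PI * d) <= 1 - d ^ 2.
Proof.
  intros Hd. pose proof PI2_3_2. pose proof PI_4. pose proof PI_RGT_0.
  destruct (cos_bound (PI * d) 0) as [_ H3]; try nra.
  unfold cos_approx, cos_term in H3. simpl in H3.
  set (a := PI * d) in *.
  assert (0 <= a <= 2) by (unfold a; nra).
  assert (3 * d <= a) by (unfold a; nra).
  assert (H5: cos a <= 1 - a^2/2 + a^4/24) by (eapply Rle_trans; [exact H3| right; field]).
  assert (a^4 <= 4 * a^2) by (assert (a^2 <= 4) by nra; nra).
  assert (9 * d^2 <= a^2) by nra.
  nra.
Qed.

Fixpoint P (n k : nat) : nat :=
  match k with O => n | S k' => (P n k' * (n + S k'))%nat end.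

Lemma P_shift n k : (P (S n) k * n = P n k * (n + S k))%nat.
Proof. induction k; simpl. lia. rewrite <- IHk. nia. Qed.

Lemma P_pos n k : (1 <= n)%nat -> (1 <= P n k)%nat.
Proof. intros; induction k; simpl; nia. Qed.

Lemma P_lower n k : (n ^ (S k) <= P n k)%nat.
Proof. induction k; simpl in *. lia.
  replace (n * (n * n ^ k))%nat with (n * n ^ k * n)%nat by ring. nia. Qed.

Lemma P_upper n k : (P n k <= (n + k) ^ (S k))%nat.
Proof. induction k; simpl in *. lia.
  assert ((n + k) * (n + k) ^ k <= (n + S k) * (n + S k) ^ k)%nat.
  { change ((n + k) ^ (S k) <= (n + S k) ^ (S k))%nat. apply Nat.pow_le_mono_l; lia. }
  nia. Qed.

Lemma P_mono n n' k : (n <= n')%nat -> (P n k <= P n' k)%nat.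
Proof. intros; induction k; simpl; nia. Qed.

Lemma P_ratio m t k : (P (m + t) k * m ^ (S k) <= (m + t) ^ (S k) * P m k)%nat.
Proof. induction k; simpl in *. nia.
  set (A := P (m+t) k) in *. set (B := P m k) in *.
  set (u := (m ^ k)%nat) in *. set (v := ((m+t)^k)%nat) in *.
  assert (H: ((m + t + S k) * m <= (m + t) * (m + S k))%nat) by nia.
  change (A * (m + t + S k) * (m * (m * u)) <= (m + t) * ((m + t) * v) * (B * (m + S k)))%nat.
  replace (A * (m + t + S k) * (m * (m * u)))%nat with ((A * (m*u)) * ((m+t+S k) * m))%nat by ring.
  replace ((m + t) * ((m + t) * v) * (B * (m + S k)))%nat with (((m+t)*v*B) * ((m + t) * (m + S k)))%nat by ring.
  apply Nat.mul_le_mono; assumption. Qed.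


Fixpoint D (x : R) (k n : nat) : R :=
  match k with O => x / INR n | S k' => D x k' (S n) - D x k' n end.

Lemma D_closed x k n : (1 <= n)%nat ->
  D x k n = (-1) ^ k * INR (fact k) * x / INR (P n k).
Proof.
  revert n; induction k; intros n Hn.
  - simpl. field. apply not_0_INR; lia.
  - simpl D. rewrite IHk by lia. rewrite IHk by lia.
    assert (H1 := P_shift n k).
    assert (Hp1 := P_pos (S n) k ltac:(lia)).
    assert (Hp2 := P_pos n k Hn).
    apply (f_equal INR) in H1. rewrite !mult_INR in H1.
    simpl P. rewrite mult_INR. rewrite fact_simpl, mult_INR.
    assert (INR (P (S n) k) <> 0) by (apply not_0_INR; lia).
    assert (INR (P n k) <> 0) by (apply not_0_INR; lia).
    assert (INR n <> 0) by (apply not_0_INR; lia).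
    assert (INR (n + S k) <> 0) by (apply not_0_INR; lia).
    assert (E: INR (P (S n) k) = INR (P n k) * INR (n + S k) / INR n).
    { rewrite <- H1. field. auto. }
    rewrite E. rewrite plus_INR in *. rewrite S_INR in *. simpl pow.
    field. repeat split; auto.
Qed.


Lemma near_D x k n d : (forall i, (i <= k)%nat -> near (x / INR (n + i)) d) ->
  near (D x k n) (2 ^ k * d).
Proof.
  revert n; induction k; intros n H.
  - simpl. replace (1 * d) with d by ring. specialize (H 0%nat (le_n _)).
    rewrite Nat.add_0_r in H. exact H.
  - simpl D. destruct (IHk (S n)) as [z1 Hz1].
    { intros i Hi. replace (S n + i)%nat with (n + S i)%nat by lia. apply H; lia. }
    destruct (IHk n) as [z2 Hz2].
    { intros i Hi. apply H; lia. }
    exists (z1 - z2)%Z. rewrite minus_IZR.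
    replace (D x k (S n) - D x k n - (IZR z1 - IZR z2)) with
      ((D x k (S n) - IZR z1) - (D x k n - IZR z2)) by ring.
    eapply Rle_trans. apply Rabs_triang. rewrite Rabs_Ropp. simpl. lra.
Qed.

Lemma notnear_mid y : 1/4 < Rabs y <= 3/4 -> ~ near y (1/8).
Proof.
  intros Hy [z Hz].
  destruct (Z.le_gt_cases z (-1)) as [H|H].
  - apply IZR_le in H. revert Hy Hz H. unfold Rabs; repeat destruct Rcase_abs; intros; lra.
  - destruct (Z.le_gt_cases z 0) as [H'|H'].
    + assert (z = 0%Z) by lia. subst. revert Hy Hz. unfold Rabs; repeat destruct Rcase_abs; intros; lra.
    + assert (1 <= z)%Z by lia. apply IZR_le in H0. revert Hy Hz H0. unfold Rabs; repeat destruct Rcase_abs; intros; lra.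
Qed.

Lemma core (N N2 s : nat) (x t : R) :
  (s * s <= N2)%nat -> (2 * N2 <= N)%nat -> INR s = exp t -> 40000000 <= t ->
  INR N <= x -> ln x <= t ^ 2 / 64 ->
  Rabs (varrho N x) < 1 / x ^ 2.
Proof.
  intros Hs HN2 HSt Ht HxN Hlx.
  remember (INR s) as Sr eqn:HSr.
  set (E := exp (t / 32)).
  assert (HE1 : 1 + t / 32 <= E) by apply exp_ineq1_le.
  assert (HSE : Sr = E ^ 32). { unfold E. rewrite exp_pow, HSt. f_equal. simpl. field. }
  assert (HS1 : 1 + t <= Sr) by (rewrite HSt; apply exp_ineq1_le).
  assert (Hlt : ln Sr = t) by (rewrite HSt; apply ln_exp).
  assert (Hs2 : (2 <= s)%nat). { apply INR_le. simpl. clear -HSr HS1 Ht. lra. }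
  assert (HN2_4 : (4 <= N2)%nat) by nia.
  assert (HxN2 : INR N2 <= x) by (apply Rle_trans with (INR N); [apply le_INR; lia | exact HxN]).
  assert (HN2pos : INR 4 <= INR N2) by (apply le_INR; lia). simpl in HN2pos.
  assert (Hx1 : 1 < x) by lra.
  assert (Hlx0 : 0 < ln x) by (rewrite <- ln_1; apply ln_increasing; lra).
  set (B := Z.to_nat (up x)).
  assert (HB : x <= INR B).
  { destruct (archimed x) as [H1 _]. unfold B. rewrite INR_IZR_INZ, Z2Nat.id. lra.
    apply le_IZR. lra. }
  destruct (dIVT (fun n => x <= Sr ^ n) 0 B ltac:(lia)) as [K' [_ [HK'1 HK'2]]].
  { simpl. lra. }
  { eapply Rle_trans. exact HB. eapply Rle_trans. apply pow2_ge. apply pow_incr. lra. }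
  cbv beta in HK'1, HK'2. apply Rnot_le_lt in HK'1.
  assert (HK't : INR K' * t < t ^ 2 / 64).
  { destruct K'. simpl. nra.
    assert (0 < Sr ^ S K') by (apply pow_lt; lra).
    apply ln_increasing in HK'1; auto. rewrite ln_pow in HK'1 by lra. rewrite Hlt in HK'1. lra. }
  assert (HK' : INR K' < t / 64) by nra.
  set (K := S K') in *.
  assert (HK : INR K < 1 + t / 64) by (unfold K; rewrite S_INR; lra).
  assert (HtS : t + 1 <= Sr) by lra.
  assert (HKs : (K <= s)%nat) by (apply INR_le; rewrite <- HSr; nra).
  destruct (dIVT (fun k => INR (fact k) * x <= 3/4 * INR (P N2 k)) 0 K ltac:(lia)) as [k' [Hk'K [Hk'1 Hk'2]]].
  { simpl. rewrite Rmult_1_l. lra. }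
  { cbv beta. assert (H1 : (fact K <= s ^ K)%nat).
    { eapply Nat.le_trans. apply fact_le_pow. apply Nat.pow_le_mono_l. exact HKs. }
    assert (H2 : (s ^ K * s ^ K <= N2 ^ K)%nat).
    { rewrite <- Nat.pow_mul_l. apply Nat.pow_le_mono_l. exact Hs. }
    assert (H3 : (2 * N2 ^ K <= P N2 K)%nat).
    { eapply Nat.le_trans. 2: apply P_lower. simpl. nia. }
    apply le_INR in H1, H2, H3. rewrite mult_INR in H2, H3. rewrite !pow_INR in H1, H2, H3. rewrite <- HSr in H1, H2.
    replace (INR 2) with 2 in H3 by (simpl; ring).
    assert (0 <= INR (fact K)) by apply pos_INR.
    assert (INR (fact K) * x <= Sr ^ K * Sr ^ K) by (apply Rmult_le_compat; lra).
    assert (0 <= INR N2 ^ K) by (apply pow_le; lra).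
    rewrite pow_INR in H2. lra. }
  set (k := S k') in *.
  cbv beta in Hk'1, Hk'2. apply Rnot_le_lt in Hk'1.
  assert (Hk1 : (1 <= k)%nat) by (unfold k; lia).
  assert (HkK : (k <= K)%nat) by (unfold k; lia).
  assert (Hks : (k + 2 <= s)%nat) by (apply INR_le; rewrite <- HSr; rewrite plus_INR;
     assert (INR k <= INR K) by (apply le_INR; lia); replace (INR 2) with 2 by (simpl; ring); lra).
  destruct (dIVT (fun n => INR (fact k) * x <= 3/4 * INR (P n k)) (s - k) N2 ltac:(nia)) as [m [Hm [Hm1 Hm2]]].
  { cbv beta. apply Rlt_not_le.
    assert (H1 : (P (s - k) k <= N2 ^ k)%nat).
    { eapply Nat.le_trans. apply P_upper. replace (s - k + k)%nat with s by lia.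
      eapply Nat.le_trans. apply (Nat.pow_le_mono_r s (S k) (k + k)); lia.
      rewrite Nat.pow_add_r, <- Nat.pow_mul_l. apply Nat.pow_le_mono_l. exact Hs. }
    assert (H2 : (N2 ^ k <= P N2 k')%nat) by (apply P_lower).
    apply le_INR in H1, H2.
    assert (H3 : INR (fact k') <= INR (fact k)).
    { apply le_INR. unfold k. simpl fact. nia. }
    assert (0 <= INR (P (s - k) k)) by apply pos_INR.
    assert (INR (fact k') * x <= INR (fact k) * x) by (apply Rmult_le_compat_r; lra).
    lra. }
  { exact Hk'2. }
  cbv beta in Hm1, Hm2. apply Rnot_le_lt in Hm1.
  set (J := (m / (S k * S k))%nat).
  assert (HJ1 : (J * (S k * S k) <= m)%nat).
  { unfold J. rewrite Nat.mul_comm. apply Nat.Div0.mul_div_le. }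
  assert (HJ2 : (m < S k * S k * (J + 1))%nat).
  { unfold J. pose proof (Nat.div_mod m (S k * S k) ltac:(lia)).
    pose proof (Nat.mod_upper_bound m (S k * S k) ltac:(lia)). nia. }
  set (Q := 2 ^ k).
  assert (HQ1 : 1 <= Q) by (apply pow_R1_Rle; lra).
  set (d := / (Q * 8)).
  assert (Hd0 : 0 < d) by (unfold d; apply Rinv_0_lt_compat; lra).
  assert (Hd1 : d <= 1/8) by (unfold d; apply Rle_trans with (/ 8); [apply Rinv_le_contravar; lra | lra]).
  set (c := 1 - d ^ 2).
  set (f := fun n : nat => cos (PI * x / INR n)).
  assert (Hblk : forall j, (j < J)%nat -> exists i, (i < S k)%nat /\ Rabs (f (m + j * S k + 1 + i)%nat) <= c).
  { intros j Hj. set (nj := (m + j * S k + 1)%nat).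
    assert (Hnj1 : (1 <= nj)%nat) by (unfold nj; lia).
    assert (HPnj : 0 < INR (P nj k)) by (apply lt_0_INR; pose proof (P_pos nj k Hnj1); lia).
    assert (HPm : 0 < INR (P m k)) by (apply lt_0_INR; pose proof (P_pos m k ltac:(lia)); lia).
    assert (Hup : INR (P (S m) k) <= INR (P nj k)) by (apply le_INR, P_mono; unfold nj; lia).
    assert (Hlow : INR (P nj k) <= 3 * INR (P m k)).
    { pose proof (P_ratio m (j * S k + 1) k) as Hr.
      replace (m + (j * S k + 1))%nat with nj in Hr by (unfold nj; lia).
      apply le_INR in Hr. rewrite !mult_INR, !pow_INR in Hr.
      assert (Enj : INR nj = INR m + INR (j * S k + 1)) by (rewrite <- plus_INR; f_equal; unfold nj; lia).
      rewrite Enj in Hr.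
      assert (Hm0 : 0 < INR m) by (apply lt_0_INR; lia).
      assert (Ht' : INR (j * S k + 1) * INR (S k) <= INR m).
      { rewrite <- mult_INR. apply le_INR.
        assert (A1 : (j * S k + 1 <= J * S k)%nat).
        { assert (A0 : ((j+1) * S k <= J * S k)%nat) by (apply Nat.mul_le_mono_r; lia).
          rewrite Nat.mul_add_distr_r in A0. lia. }
        assert (A2 : ((j * S k + 1) * S k <= J * S k * S k)%nat) by (apply Nat.mul_le_mono_r; exact A1).
        rewrite <- Nat.mul_assoc in A2. lia. }
      pose proof (pow_ratio (INR m) (INR (j * S k + 1)) (S k) Hm0 (pos_INR _) Ht').
      assert (0 < INR m ^ S k) by (apply pow_lt; lra).
      nra. }
    set (G := INR (fact k) * x / INR (P nj k)).
    assert (HG : G * INR (P nj k) = INR (fact k) * x) by (unfold G; field; lra).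
    assert (HG1 : 1/4 < G) by nra.
    assert (HG2 : G <= 3/4) by nra.
    destruct (classic (forall i, (i <= k)%nat -> near (x / INR (nj + i)) d)) as [Hall|Hex].
    - exfalso. pose proof (near_D x k nj d Hall) as Hn.
      change (2 ^ k) with Q in Hn. replace (Q * d) with (1/8) in Hn by (unfold d; field; lra).
      rewrite D_closed in Hn by exact Hnj1.
      refine (notnear_mid _ _ Hn).
      replace ((-1) ^ k * INR (fact k) * x / INR (P nj k)) with ((-1) ^ k * G) by (unfold G, Rdiv; ring).
      rewrite Rabs_mult, pow_1_abs, Rabs_right by lra. lra.
    - apply not_all_ex_not in Hex. destruct Hex as [i Hi].
      apply imply_to_and in Hi. destruct Hi as [Hik Hin].
      exists i. split. lia. unfold f.
      replace (PI * x / INR (nj + i)) with (PI * (x / INR (nj + i))) by (unfold Rdiv; ring).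
      apply Rle_trans with (cos (PI * d)). apply cos_notnear. lra. exact Hin.
      apply cos_small. lra. }
  pose proof (cnt_blocks f c m (S k) J Hblk) as Hc1.
  assert (Hc2 : (cnt f c (m + J * S k) <= cnt f c N)%nat) by (apply cnt_mono; nia).
  assert (Hc01 : 0 <= c <= 1).
  { unfold c. split. assert (d ^ 2 <= 1) by nra. lra. assert (0 <= d ^ 2) by nra. lra. }
  assert (Hvr : varrho N x = prod_1_to N f) by reflexivity.
  rewrite Hvr.
  eapply Rle_lt_trans. apply prod_bound. exact Hc01.
  { intro n. unfold f. apply Rabs_le. apply COS_bound. }
  eapply Rle_lt_trans. apply pow_decr. exact Hc01. apply (Nat.le_trans _ _ _ Hc1 Hc2).
  assert (Hce : c <= exp (- d ^ 2)) by (unfold c; pose proof (exp_ineq1_le (- d ^ 2)); lra).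
  eapply Rle_lt_trans. apply pow_incr. split. lra. exact Hce.
  rewrite exp_pow.
  assert (Hx2 : 1 / x ^ 2 = exp (- (2 * ln x))).
  { rewrite exp_Ropp. replace (2 * ln x) with (INR 2 * ln x) by (simpl; ring).
    rewrite <- exp_pow, exp_ln by lra. field. lra. }
  rewrite Hx2. apply exp_increasing.
  assert (HdQ : d ^ 2 = / (64 * Q ^ 2)) by (unfold d; field; lra).
  assert (HQe : Q ^ 2 <= 9 * E).
  { assert (H2e : 2 <= exp 1) by (pose proof (exp_ineq1_le 1); lra).
    assert (HQa : Q <= exp (INR k)).
    { unfold Q. rewrite <- (Rmult_1_r (INR k)), <- exp_pow. apply pow_incr. lra. }
    assert (HQb : Q ^ 2 <= exp (INR k) ^ 2) by (apply pow_incr; lra).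
    rewrite exp_pow in HQb.
    assert (HQc : INR k <= INR K) by (apply le_INR; lia).
    assert (HQd : exp (INR 2 * INR k) <= exp (1 + 1 + t / 32)).
    { destruct (Req_dec (INR 2 * INR k) (1 + 1 + t/32)) as [e|e]. rewrite e; lra.
      left. apply exp_increasing. replace (INR 2) with 2 in * by (simpl; ring). lra. }
    rewrite !exp_plus in HQd. fold E in HQd.
    assert (exp 1 * exp 1 <= 9) by (pose proof exp_le_3; pose proof (exp_pos 1); nra).
    assert (0 < E) by (unfold E; apply exp_pos). nra. }
  assert (HmJ : INR m < (INR k + 1) ^ 2 * (INR J + 1)).
  { apply lt_INR in HJ2. rewrite !mult_INR, plus_INR, S_INR in HJ2. simpl in HJ2 |- *. lra. }
  assert (Hms : Sr - INR k <= INR m).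
  { rewrite HSr, <- minus_INR by lia. apply le_INR. lia. }
  assert (HkK' : INR k <= INR K) by (apply le_INR; lia).
  assert (Ha : (INR k + 1) ^ 2 <= t ^ 2 / 256).
  { assert (0 <= INR k) by apply pos_INR. 
    assert (INR k + 1 <= t / 16) by lra. 
    replace (t ^ 2 / 256) with ((t/16) ^ 2) by field. apply pow_incr. lra. }
  assert (HSt4 : t ^ 4 * E <= Sr).
  { set (u := t / 32).
    assert (E ^ 5 >= u ^ 5) by (apply Rle_ge, pow_incr; unfold u in *; lra).
    assert (u ^ 5 >= 32 ^ 4 * u ^ 4).
    { assert (0 <= u ^ 4) by (apply pow_le; unfold u; lra).
      replace (u ^ 5) with (u * u ^ 4) by ring.
      assert (E32 : 32 ^ 4 = 1048576) by ring. rewrite E32.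
      apply Rle_ge. apply Rmult_le_compat_r. assumption. unfold u. lra. }
    assert (t ^ 4 = 32 ^ 4 * u ^ 4) by (unfold u; field).
    assert (E <= E ^ 27) by (rewrite <- (pow_1 E) at 1; apply Rle_pow; [lra | lia]).
    assert (Sr = E ^ 5 * E ^ 27) by (rewrite HSE, <- pow_add; reflexivity).
    assert (0 <= t ^ 4) by (apply pow_le; lra).
    assert (E5 : t ^ 4 <= E ^ 5) by lra.
    assert (0 <= E ^ 27) by (apply pow_le; lra).
    assert (t ^ 4 * E ^ 27 <= E ^ 5 * E ^ 27) by (apply Rmult_le_compat_r; assumption).
    assert (t ^ 4 * E <= t ^ 4 * E ^ 27) by (apply Rmult_le_compat_l; assumption).
    lra. }
  assert (HJbig : 128 * t ^ 2 * E - 1 < INR J).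
  { assert (0 <= INR J) by apply pos_INR.
    assert (Sr / 2 < t ^ 2 / 256 * (INR J + 1)).
    { assert (0 <= INR k) by apply pos_INR. 
      assert ((INR k + 1) ^ 2 * (INR J + 1) <= t ^ 2 / 256 * (INR J + 1)) by (apply Rmult_le_compat_r; lra).
      lra. }
    assert (t ^ 4 * E / 2 < t ^ 2 / 256 * (INR J + 1)) by lra.
    assert (0 < t ^ 2) by nra.
    replace (t ^ 4) with (t ^ 2 * t ^ 2) in H1 by ring.
    assert (t ^ 2 / 256 * (128 * t ^ 2 * E) < t ^ 2 / 256 * (INR J + 1)).
    { replace (t ^ 2 / 256 * (128 * t ^ 2 * E)) with (t ^ 2 * t ^ 2 * E / 2) by field. exact H1. }
    apply Rmult_lt_reg_l in H3. lra. lra. }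
  rewrite HdQ.
  assert (0 < Q ^ 2) by (apply pow_lt; lra).
  assert (HlxQ : ln x * Q ^ 2 <= t ^ 2 / 64 * (9 * E)) by (apply Rmult_le_compat; [lra|lra|lra|exact HQe]).
  assert (0 < E) by (unfold E; apply exp_pos).
  assert (2 * ln x * (64 * Q ^ 2) < INR J).
  { assert (1 <= t ^ 2) by (apply pow_R1_Rle; lra).
    assert (1 <= t ^ 2 * E) by (replace 1 with (1 * 1) by ring; apply Rmult_le_compat; lra).
    replace (2 * ln x * (64 * Q ^ 2)) with (128 * (ln x * Q ^ 2)) by ring. lra. }
  apply (Rmult_lt_reg_r (64 * Q ^ 2)). lra.
  replace (INR J * - / (64 * Q ^ 2) * (64 * Q ^ 2)) with (- INR J) by (field; lra).
  replace (- (2 * ln x) * (64 * Q ^ 2)) with (- (2 * ln x * (64 * Q ^ 2))) by ring.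
  lra.
Qed.

Theorem proposition3p2 :
  exists C' : R, 0 < C' /\
    exists N0 : nat, forall N : nat, (N0 <= N)%nat ->
      forall x : R, INR N <= x -> x <= exp (C' * (ln (INR N))^2) ->
        Rabs (varrho N x) < 1 / x ^ 2.
Proof.
  exists (1/576). split. lra.
  set (M := (Z.to_nat (up (exp 40000000)) + 4)%nat).
  assert (HM : exp 40000000 <= INR M).
  { destruct (archimed (exp 40000000)) as [H1 _]. unfold M. rewrite plus_INR, INR_IZR_INZ, Z2Nat.id.
    simpl. lra. apply le_IZR. pose proof (exp_pos 40000000). lra. }
  exists (2 * (M + 1) * (M + 1))%nat.
  intros N HN x HxN Hxe.
  set (N2 := (N / 2)%nat). set (s := Nat.sqrt N2).
  assert (HN2a : (2 * N2 <= N)%nat) by (unfold N2; apply Nat.Div0.mul_div_le).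
  assert (HN2b : (N <= 2 * N2 + 1)%nat).
  { unfold N2. pose proof (Nat.div_mod N 2 ltac:(lia)). pose proof (Nat.mod_upper_bound N 2 ltac:(lia)). lia. }
  destruct (Nat.sqrt_spec N2 ltac:(lia)) as [Hs1 Hs2]. fold s in Hs1, Hs2.
  assert (HsM : (M + 1 <= s)%nat).
  { unfold s. rewrite <- (Nat.sqrt_square (M + 1)). apply Nat.sqrt_le_mono. nia. }
  assert (HM4 : (4 <= M)%nat) by (unfold M; lia).
  assert (HsR : exp 40000000 <= INR s) by (eapply Rle_trans; [exact HM | apply le_INR; lia]).
  assert (Hs0 : 0 < INR s) by (pose proof (exp_pos 40000000); lra).
  set (t := ln (INR s)).
  assert (Hst : INR s = exp t) by (unfold t; rewrite exp_ln; auto).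
  assert (Ht : 40000000 <= t).
  { unfold t. rewrite <- (ln_exp 40000000). apply ln_le_mono. apply exp_pos. exact HsR. }
  assert (HN3 : (N <= s * s * s)%nat) by nia.
  assert (HN1 : (1 <= N)%nat) by nia.
  assert (HNpos : 0 < INR N) by (apply lt_0_INR; lia).
  assert (HlnN0 : 0 <= ln (INR N)).
  { rewrite <- ln_1. apply ln_le_mono. lra. replace 1 with (INR 1) by reflexivity. apply le_INR. lia. }
  assert (HlnN : ln (INR N) <= 3 * t).
  { unfold t. replace (3 * ln (INR s)) with (ln (INR s ^ 3)) by (rewrite ln_pow by lra; simpl; ring).
    apply ln_le_mono. lra. rewrite <- pow_INR. apply le_INR. simpl. nia. }
  apply (core N N2 s x t); auto.
  assert (ln x <= 1/576 * ln (INR N) ^ 2).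
  { rewrite <- (ln_exp (1/576 * ln (INR N) ^ 2)). apply ln_le_mono. lra. exact Hxe. }
  assert (ln (INR N) ^ 2 <= (3 * t) ^ 2) by (apply pow_incr; lra).
  nra.
Qed.
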